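(* Let $X,Z\in\mathbb{R}^{n\times r}$ with $XX^{T}\ne ZZ^{T}$. Let $Z_{\perp}=(I-XX^{\dagger})Z$ and define $$\alpha=\frac{\|Z_{\perp}Z_{\perp}^{T}\|_{F}}{\|XX^{T}-ZZ^{T}\|_{F}},\qquad\beta=\frac{\sigma_{\min}^{2}(X)}{\|XX^{T}-ZZ^{T}\|_{F}}\cdot\frac{\mathrm{tr}(Z_{\perp}Z_{\perp}^{T})}{\|Z_{\perp}Z_{\perp}^{T}\|_{F}},$$ and $$\delta_{\mathrm{lb}}(X,Z)=\gamma(\alpha,\beta):=\begin{cases}\sqrt{1-\alpha^{2}} & \text{if }\beta\ge\frac{\alpha}{1+\sqrt{1-\alpha^{2}}},\\ \frac{1-2\alpha\beta+\beta^{2}}{1-\beta^{2}} & \text{if }\beta<\frac{\alpha}{1+\sqrt{1-\alpha^{2}}}.\end{cases}$$ Then $\delta(X,Z)\ge\delta_{\mathrm{lb}}(X,Z)$.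
   Context: $A^{\dagger}$ denotes the Moore–Penrose pseudoinverse, $\sigma_{\min}(X)$ the smallest (i.e. $r$-th) singular value of $X\in\mathbb{R}^{n\times r}$. When $Z_{\perp}=0$ (so $\alpha=0$ and $\gamma=1$ regardless), $\beta$ may be taken as $\sigma_{\min}^{2}(X)/\|XX^{T}-ZZ^{T}\|_{F}$. A linear map $\mathcal{A}:\mathbb{R}^{n\times n}\to\mathbb{R}^{m}$ satisfies $(\delta,p)$-RIP if $0\le\delta<1$ and there is $\nu>0$ with $(1-\delta)\|E\|_{F}^{2}\le\frac{1}{\nu}\|\mathcal{A}(E)\|^{2}\le(1+\delta)\|E\|_{F}^{2}$ for all $E\in\mathbb{R}^{n\times n}$ of rank at most $p$. With $r^{\star}=\mathrm{rank}(Z)$, $\delta(X,Z)$ is the infimum of all $\delta$ for which there exist $m\ge1$ and a linear $\mathcal{A}:\mathbb{R}^{n\times n}\to\mathbb{R}^{m}$ satisfying $(\delta,r+r^{\star})$-RIP such that $f_{\mathcal{A}}(U)=\|\mathcal{A}(UU^{T}-ZZ^{T})\|^{2}$ (on $\mathbb{R}^{n\times r}$) satisfies $\nabla f_{\mathcal{A}}(X)=0$ and $\nabla^{2}f_{\mathcal{A}}(X)\succeq0$. *)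

(* Defs.v *)
From HB Require Import structures.
From mathcomp Require Import all_boot all_order all_algebra.
From mathcomp Require Import all_classical all_reals all_analysis.
Set Implicit Arguments. Unset Strict Implicit. Unset Printing Implicit Defensive.
Import Order.TTheory GRing.Theory Num.Theory.
Local Open Scope ring_scope.
Local Open Scope classical_set_scope.

Section Defs.
Variable R : realType.

Definition frob (m p : nat) (A : 'M[R]_(m, p)) : R :=
  Num.sqrt (\sum_(i < m) \sum_(j < p) A i j ^+ 2).

Definition sqnorm (m : nat) (v : 'rV[R]_m) : R := \sum_(i < m) v 0 i ^+ 2.

Definition is_pinv (m p : nat) (A : 'M[R]_(m, p)) (B : 'M[R]_(p, m)) : Prop :=
  [/\ A *m B *m A = A, B *m A *m B = B,
      (A *m B)^T = A *m B & (B *m A)^T = B *m A].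

(* sigma_min(X)^2 = smallest eigenvalue of X^T X (= square of the r-th
   singular value of X in R^{n x r}) *)
Definition sigma_min_sq (n r : nat) (X : 'M[R]_(n, r)) : R :=
  inf [set a : R | eigenvalue (X^T *m X) a].

Definition RIP (n m : nat) (A : 'M[R]_n -> 'rV[R]_m) (delta : R) (p : nat) : Prop :=
  0 <= delta < 1 /\
  exists nu : R, 0 < nu /\
    forall E : 'M[R]_n, (\rank E <= p)%N ->
      (1 - delta) * frob E ^+ 2 <= sqnorm (A E) / nu /\
      sqnorm (A E) / nu <= (1 + delta) * frob E ^+ 2.

Definition fA (n r m : nat) (A : 'M[R]_n -> 'rV[R]_m) (Z : 'M[R]_(n, r))
  (U : 'M[R]_(n, r)) : R := sqnorm (A (U *m U^T - Z *m Z^T)).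

Definition grad_zero (n r : nat) (f : 'M[R]_(n, r) -> R) (X : 'M[R]_(n, r)) : Prop :=
  forall D : 'M[R]_(n, r), derive1 (fun t : R => f (X + t *: D)) 0 = 0.

Definition hess_psd (n r : nat) (f : 'M[R]_(n, r) -> R) (X : 'M[R]_(n, r)) : Prop :=
  forall D : 'M[R]_(n, r), 0 <= derive1n 2 (fun t : R => f (X + t *: D)) 0.

Definition delta_set (n r : nat) (X Z : 'M[R]_(n, r)) : set R :=
  [set d : R | exists (m : nat) (A : {linear 'M[R]_n -> 'rV[R]_m}),
     (1 <= m)%N /\ RIP A d (r + \rank Z) /\
     grad_zero (fA A Z) X /\ hess_psd (fA A Z) X].

(* delta(X,Z) as an extended real: inf of the empty set is +oo *)
Definition delta_XZ (n r : nat) (X Z : 'M[R]_(n, r)) : \bar R :=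
  ereal_inf [set (d%:E) | d in delta_set X Z].

Definition gamma_fn (alpha beta : R) : R :=
  if alpha / (1 + Num.sqrt (1 - alpha ^+ 2)) <= beta
  then Num.sqrt (1 - alpha ^+ 2)
  else (1 - 2 * alpha * beta + beta ^+ 2) / (1 - beta ^+ 2).

Definition Zperp (n r : nat) (X : 'M[R]_(n, r)) (Xp : 'M[R]_(r, n))
  (Z : 'M[R]_(n, r)) : 'M[R]_(n, r) := (1%:M - X *m Xp) *m Z.

Definition alpha_of (n r : nat) (X : 'M[R]_(n, r)) (Xp : 'M[R]_(r, n))
  (Z : 'M[R]_(n, r)) : R :=
  let Zp := Zperp X Xp Z in
  frob (Zp *m Zp^T) / frob (X *m X^T - Z *m Z^T).

(* when Z_perp = 0, beta is taken as sigma_min^2(X)/||XX^T - ZZ^T||_F *)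
Definition beta_of (n r : nat) (X : 'M[R]_(n, r)) (Xp : 'M[R]_(r, n))
  (Z : 'M[R]_(n, r)) : R :=
  let Zp := Zperp X Xp Z in
  if Zp == 0 then sigma_min_sq X / frob (X *m X^T - Z *m Z^T)
  else sigma_min_sq X / frob (X *m X^T - Z *m Z^T) *
       (\tr (Zp *m Zp^T) / frob (Zp *m Zp^T)).

Definition delta_lb (n r : nat) (X : 'M[R]_(n, r)) (Xp : 'M[R]_(r, n))
  (Z : 'M[R]_(n, r)) : R :=
  gamma_fn (alpha_of X Xp Z) (beta_of X Xp Z).

End Defs.

(* Main.v *)
Require Import Defs.
From HB Require Import structures.
From mathcomp Require Import all_boot all_order all_algebra.
From mathcomp Require Import all_classical all_reals all_analysis.
From mathcomp Require Import ring lra.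
Set Implicit Arguments. Unset Strict Implicit. Unset Printing Implicit Defensive.
Import Order.TTheory GRing.Theory Num.Theory.
Local Open Scope ring_scope.
From mathcomp Require Import complex.
Lemma psd2 (R : realType) (A B C : R) :
  (forall x y : R, 0 <= A * x ^+ 2 - 2 * B * x * y + C * y ^+ 2) ->
  [/\ 0 <= A, 0 <= C & B ^+ 2 <= A * C].
Proof.
move=> h.
have hA := h 1 0; have hC := h 0 1.
have hA' : 0 <= A by lra.
have hC' : 0 <= C by lra.
split => //.
have h1 := h B A.
have h2 := h (C + 1) (2 * B).
have [A0|Apos] := eqVneq A 0.
  subst A. nra.
have Ap : 0 < A by rewrite lt_def Apos.
nra.
Qed.

Lemma form2_bound (R : realType) (k11 k12 k22 n1 n2 d : R) :
  0 < n1 -> 0 < n2 ->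
  (forall x y : R, `|k11 * x ^+ 2 + 2 * k12 * x * y + k22 * y ^+ 2| <=
                   d * (n1 * x ^+ 2 + n2 * y ^+ 2)) ->
  k11 ^+ 2 * n2 + k12 ^+ 2 * n1 <= d ^+ 2 * n1 ^+ 2 * n2.
Proof.
move=> n1p n2p h.
have [a1 c1 p1] : [/\ 0 <= d * n1 - k11, 0 <= d * n2 - k22 &
     k12 ^+ 2 <= (d * n1 - k11) * (d * n2 - k22)].
  apply: psd2 => x y; have := h x y; rewrite ler_norml => /andP[_ H]; lra.
have [a2 c2 p2] : [/\ 0 <= d * n1 + k11, 0 <= d * n2 + k22 &
     (- k12) ^+ 2 <= (d * n1 + k11) * (d * n2 + k22)].
  apply: psd2 => x y; have := h x y; rewrite ler_norml => /andP[H _]; lra.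
rewrite sqrrN in p2.
have [hc|hc] := lerP 0 (k22 * n1 + k11 * n2).
- have : (d * n2 - k22) * n1 <= (d * n1 + k11) * n2 by lra.
  move=> H.
  have H2 : k12 ^+ 2 * n1 <= (d * n1 - k11) * ((d * n2 - k22) * n1).
    by rewrite mulrA; apply: ler_wpM2r; [lra|].
  have H3 : (d * n1 - k11) * ((d * n2 - k22) * n1) <= (d * n1 - k11) * ((d * n1 + k11) * n2).
    by apply: ler_wpM2l.
  nra.
- have : (d * n2 + k22) * n1 <= (d * n1 - k11) * n2 by lra.
  move=> H.
  have H2 : k12 ^+ 2 * n1 <= (d * n1 + k11) * ((d * n2 + k22) * n1).
    by rewrite mulrA; apply: ler_wpM2r; [lra|].
  have H3 : (d * n1 + k11) * ((d * n2 + k22) * n1) <= (d * n1 + k11) * ((d * n1 - k11) * n2).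
    by apply: ler_wpM2l.
  nra.
Qed.
Lemma gamma_le (R : realType) (al be a d : R) :
  0 < al -> al <= 1 -> 0 <= be -> 0 <= d -> d < 1 ->
  al ^+ 2 * (a - 1) ^+ 2 + a ^+ 2 * (1 - al ^+ 2) <= al ^+ 2 * d ^+ 2 ->
  a <= (1 + d) * al * be ->
  gamma_fn al be <= d.
Proof.
move=> a0 a1 b0 d0 d1 H Ha.
set s := Num.sqrt (1 - al ^+ 2).
have s0 : 0 <= s by rewrite sqrtr_ge0.
have ss : s ^+ 2 = 1 - al ^+ 2 by rewrite sqr_sqrtr // subr_ge0 expr_le1 // ltW.
have key : (a - al ^+ 2) ^+ 2 + al ^+ 2 * s ^+ 2 <= al ^+ 2 * d ^+ 2 by rewrite ss; nra.
have sd : s ^+ 2 <= d ^+ 2.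
  have : al ^+ 2 * s ^+ 2 <= al ^+ 2 * d ^+ 2.
    by have := sqr_ge0 (a - al ^+ 2); lra.
  by rewrite ler_pM2l ?exprn_gt0.
have sd' : s <= d by nra.
rewrite /gamma_fn -/s.
case: ifP => hb; first by [].
move/negbT: hb; rewrite -ltNge => hb.
have hs1 : 0 < 1 + s by lra.
have hb' : be * (1 + s) < al by rewrite -ltr_pdivlMr.
have be1 : be < 1 by nra.
have ob : 0 < 1 - be ^+ 2 by nra.
rewrite ler_pdivrMr //.
have [hc|hc] := lerP (be * (1 + d)) al.
-
  have c2 : (1 + d) * al * be <= al ^+ 2 by nra.
  have e1 : (al ^+ 2 - (1 + d) * al * be) ^+ 2 <= (al ^+ 2 - a) ^+ 2.
    rewrite ler_sqr ?nnegrE; lra.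
  have e2 : (al ^+ 2 - (1 + d) * al * be) ^+ 2 + al ^+ 2 * s ^+ 2 <= al ^+ 2 * d ^+ 2.
    have : (al ^+ 2 - a) ^+ 2 = (a - al ^+ 2) ^+ 2 by rewrite -sqrrN opprB.
    lra.
  have e3 : (al - (1 + d) * be) ^+ 2 + s ^+ 2 <= d ^+ 2.
    have : al ^+ 2 * ((al - (1 + d) * be) ^+ 2 + s ^+ 2) <= al ^+ 2 * d ^+ 2.
      have -> : al ^+ 2 * ((al - (1 + d) * be) ^+ 2 + s ^+ 2) =
        (al ^+ 2 - (1 + d) * al * be) ^+ 2 + al ^+ 2 * s ^+ 2 by ring.
      exact: e2.
    by rewrite ler_pM2l ?exprn_gt0.
  rewrite ss in e3.
  (* g(d) = (1-b^2)(d - gamma)(d+1) >= 0 *)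
  have g : 0 <= (1 - be ^+ 2) * d ^+ 2 + 2 * (al * be - be ^+ 2) * d - (1 - 2 * al * be + be ^+ 2) by nra.
  have fact : (1 - be ^+ 2) * d ^+ 2 + 2 * (al * be - be ^+ 2) * d - (1 - 2 * al * be + be ^+ 2)
     = (d + 1) * (d * (1 - be ^+ 2) - (1 - 2 * al * be + be ^+ 2)) by ring.
  rewrite fact in g.
  have : 0 <= d * (1 - be ^+ 2) - (1 - 2 * al * be + be ^+ 2).
    by rewrite -(pmulr_rge0 _ (_ : 0 < d + 1)) //; lra.
  lra.
-
  have bpos : 0 < be by nra.
  have q : 2 * be <= al * (1 + be ^+ 2).
    (* al be^2 - 2 be + al >= 0 since be <= (1-s)/al *)
    have e : be * (1 + s) * (1 - s) = be * al ^+ 2.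
      have -> : be * (1 + s) * (1 - s) = be * (1 - s ^+ 2) by ring.
      by rewrite ss; ring.
    have f1 : al * be <= 1 - s.
      have : be * (1 + s) * (1 - s) <= al * (1 - s).
        by apply: ler_wpM2r; [lra|lra].
      rewrite e => h.
      have : al * (al * be) <= al * (1 - s) by lra.
      by rewrite ler_pM2l.
    have f2 : 0 <= (al * be - 1 + s) * (al * be - 1 - s) by nra.
    have f3 : (al * be - 1 + s) * (al * be - 1 - s) = al * (al * be ^+ 2 - 2 * be + al).
      have -> : (al * be - 1 + s) * (al * be - 1 - s) = (al * be - 1) ^+ 2 - s ^+ 2 by ring.
      by rewrite ss; ring.
    rewrite f3 pmulr_rge0 // in f2.
    lra.
  nra.
Qed.

Lemma bridge (R : realType) (eps mu bee bem bmm T d : R) :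
  0 < eps -> 0 < mu -> mu <= eps -> 0 <= T -> 0 <= d -> d < 1 ->
  bee + bem = 0 -> - ((1 + d) * T) <= bem ->
  (forall x y : R,
     (1 - d) * (x ^+ 2 * eps ^+ 2 - 2 * x * y * mu ^+ 2 + y ^+ 2 * mu ^+ 2)
       <= x ^+ 2 * bee + 2 * x * y * bem + y ^+ 2 * bmm /\
     x ^+ 2 * bee + 2 * x * y * bem + y ^+ 2 * bmm <=
       (1 + d) * (x ^+ 2 * eps ^+ 2 - 2 * x * y * mu ^+ 2 + y ^+ 2 * mu ^+ 2)) ->
  gamma_fn (mu / eps) (T / (eps * mu)) <= d.
Proof.
move=> e0 m0 me T0 d0 d1 hs hb hq.
have T1 : mu ^+ 2 * (bee - eps ^+ 2) ^+ 2 + bee ^+ 2 * (eps ^+ 2 - mu ^+ 2)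
          <= d ^+ 2 * eps ^+ 4 * mu ^+ 2.
  have [->|mlt] := eqVneq mu eps.
    have [h1 h2] := hq 1 0.
    have : (bee - eps ^+ 2) ^+ 2 <= (d * eps ^+ 2) ^+ 2.
      rewrite -ler_sqrt ?sqr_ge0 // !sqrtr_sqr ler_norml; apply/andP; split.
        rewrite ger0_norm; [lra| by rewrite mulr_ge0 // sqr_ge0].
      by rewrite ger0_norm; [lra| by rewrite mulr_ge0 // sqr_ge0].
    move=> h; rewrite subrr mulr0 addr0.
    have -> : d ^+ 2 * eps ^+ 4 * eps ^+ 2 = eps ^+ 2 * (d * eps ^+ 2) ^+ 2 by ring.
    by apply: ler_wpM2l => //; rewrite sqr_ge0.
  have mlt' : mu < eps by rewrite lt_def eq_sym mlt me.
  have n2p : 0 < eps ^+ 2 * mu ^+ 2 * (eps ^+ 2 - mu ^+ 2).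
    apply: mulr_gt0; first by apply: mulr_gt0; apply: exprn_gt0.
    by rewrite subr_gt0 ltr_pXn2r // ?nnegrE ltW.
  have := @form2_bound R (bee - eps ^+ 2) (bee * (mu ^+ 2 - eps ^+ 2))
    ((mu ^+ 2) ^+ 2 * (bee - eps ^+ 2) + 2 * mu ^+ 2 * eps ^+ 2 * (bem + mu ^+ 2)
       + (eps ^+ 2) ^+ 2 * (bmm - mu ^+ 2))
    (eps ^+ 2) (eps ^+ 2 * mu ^+ 2 * (eps ^+ 2 - mu ^+ 2)) d (exprn_gt0 _ e0) n2p.
  have bemE : bem = - bee by lra.
  move=> FB.
  have hyp : forall x y : R, `|(bee - eps ^+ 2) * x ^+ 2 + 2 * (bee * (mu ^+ 2 - eps ^+ 2)) * x * y +
     ((mu ^+ 2) ^+ 2 * (bee - eps ^+ 2) + 2 * mu ^+ 2 * eps ^+ 2 * (bem + mu ^+ 2)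
       + (eps ^+ 2) ^+ 2 * (bmm - mu ^+ 2)) * y ^+ 2| <=
     d * (eps ^+ 2 * x ^+ 2 + eps ^+ 2 * mu ^+ 2 * (eps ^+ 2 - mu ^+ 2) * y ^+ 2).
    move=> x y; have [h1 h2] := hq (x + y * mu ^+ 2) (y * eps ^+ 2).
    set L := (x + y * mu ^+ 2) ^+ 2 * bee + _ + _ in h1 h2.
    set N := (x + y * mu ^+ 2) ^+ 2 * eps ^+ 2 - _ + _ in h1 h2.
    have LE : L - N = (bee - eps ^+ 2) * x ^+ 2 + 2 * (bee * (mu ^+ 2 - eps ^+ 2)) * x * y +
     ((mu ^+ 2) ^+ 2 * (bee - eps ^+ 2) + 2 * mu ^+ 2 * eps ^+ 2 * (bem + mu ^+ 2)
       + (eps ^+ 2) ^+ 2 * (bmm - mu ^+ 2)) * y ^+ 2.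
      rewrite /L /N bemE; ring.
    have NE : N = eps ^+ 2 * x ^+ 2 + eps ^+ 2 * mu ^+ 2 * (eps ^+ 2 - mu ^+ 2) * y ^+ 2.
      rewrite /N; ring.
    rewrite -LE -NE ler_norml; apply/andP; split; lra.
  have H := FB hyp.
  have ee : 0 < eps ^+ 2 * (eps ^+ 2 - mu ^+ 2).
    by rewrite pmulr_rgt0 ?exprn_gt0 // subr_gt0 ltr_pXn2r // ?nnegrE ltW.
  rewrite -(ler_pM2l ee).
  have -> : eps ^+ 2 * (eps ^+ 2 - mu ^+ 2) * (mu ^+ 2 * (bee - eps ^+ 2) ^+ 2 + bee ^+ 2 * (eps ^+ 2 - mu ^+ 2))
    = (bee - eps ^+ 2) ^+ 2 * (eps ^+ 2 * mu ^+ 2 * (eps ^+ 2 - mu ^+ 2)) + (bee * (mu ^+ 2 - eps ^+ 2)) ^+ 2 * eps ^+ 2 by ring.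
  have -> : eps ^+ 2 * (eps ^+ 2 - mu ^+ 2) * (d ^+ 2 * eps ^+ 4 * mu ^+ 2)
    = d ^+ 2 * (eps ^+ 2) ^+ 2 * (eps ^+ 2 * mu ^+ 2 * (eps ^+ 2 - mu ^+ 2)) by ring.
  exact: H.
apply: (@gamma_le R _ _ (bee / eps ^+ 2)).
- by rewrite divr_gt0.
- by rewrite ler_pdivrMr // mul1r.
- by rewrite divr_ge0 // mulr_ge0 // ltW.
- by [].
- by [].
- have epsn : eps != 0 by rewrite gt_eqF.
  have ep6 : 0 < eps ^+ 6 by rewrite exprn_gt0.
  rewrite -(ler_pM2l ep6).
  have -> : eps ^+ 6 * ((mu / eps) ^+ 2 * (bee / eps ^+ 2 - 1) ^+ 2 + (bee / eps ^+ 2) ^+ 2 * (1 - (mu / eps) ^+ 2))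
      = mu ^+ 2 * (bee - eps ^+ 2) ^+ 2 + bee ^+ 2 * (eps ^+ 2 - mu ^+ 2) by field.
  have -> : eps ^+ 6 * ((mu / eps) ^+ 2 * d ^+ 2) = d ^+ 2 * eps ^+ 4 * mu ^+ 2 by field.
  exact: T1.
- have -> : (1 + d) * (mu / eps) * (T / (eps * mu)) = (1 + d) * T / eps ^+ 2.
    by field; rewrite ?gt_eqF.
  rewrite ler_pM2r ?invr_gt0 ?exprn_gt0 //; lra.
Qed.

Local Open Scope complex_scope.
Lemma ReD (R : realType) (x y : R[i]) : Re (x + y) = Re x + Re y.
Proof. by case: x; case: y. Qed.
Lemma ImD (R : realType) (x y : R[i]) : Im (x + y) = Im x + Im y.
Proof. by case: x; case: y. Qed.
Lemma Re_sum (R : realType) (I : finType) (F : I -> R[i]) :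
  Re (\sum_i F i) = \sum_i Re (F i).
Proof. by apply: (big_morph _ (@ReD R)). Qed.
Lemma Im_sum (R : realType) (I : finType) (F : I -> R[i]) :
  Im (\sum_i F i) = \sum_i Im (F i).
Proof. by apply: (big_morph _ (@ImD R)). Qed.
Lemma ReMr (R : realType) (x : R[i]) (k : R) : Re (x * k%:C) = Re x * k.
Proof. by case: x => a b /=; rewrite mulr0 subr0. Qed.
Lemma ImMr (R : realType) (x : R[i]) (k : R) : Im (x * k%:C) = Im x * k.
Proof. by case: x => a b /=; rewrite mulr0 add0r. Qed.
Lemma ReM (R : realType) (x y : R[i]) : Re (x * y) = Re x * Re y - Im x * Im y.
Proof. by case: x; case: y. Qed.
Lemma ImM (R : realType) (x y : R[i]) : Im (x * y) = Re x * Im y + Im x * Re y.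
Proof. by case: x => a b; case: y => c d /=; ring. Qed.

Lemma sym_real_eig (R : realType) (r : nat) (S : 'M[R]_r.+1) :
  S^T = S -> exists a, eigenvalue S a.
Proof.
move=> Ssym.
have [a] := @eigenvalue_closed _ _ (map_mx (real_complex R) S) (ltn0Sn r).
case/eigenvalueP => w Hw wn0.
set u := \row_j Re (w 0 j); set v := \row_j Im (w 0 j).
have E1 : forall j, \sum_k u 0 k * S k j = Re a * u 0 j - Im a * v 0 j.
  move=> j; have := congr1 (fun m : 'M[R[i]]_(1, r.+1) => Re (m 0 j)) Hw.
  rewrite !mxE Re_sum /= => E; rewrite ?mxE -ReM -E.
  by apply: eq_bigr => k _; rewrite !mxE ReMr.
have E2 : forall j, \sum_k v 0 k * S k j = Im a * u 0 j + Re a * v 0 j.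
  move=> j; have := congr1 (fun m : 'M[R[i]]_(1, r.+1) => Im (m 0 j)) Hw.
  rewrite !mxE Im_sum /= => E; rewrite ?mxE addrC -ImM -E.
  by apply: eq_bigr => k _; rewrite !mxE ImMr.
have sw : \sum_j (\sum_k u 0 k * S k j) * v 0 j = \sum_j (\sum_k v 0 k * S k j) * u 0 j.
  under eq_bigr do rewrite mulr_suml.
  under [RHS]eq_bigr do rewrite mulr_suml.
  rewrite exchange_big; apply: eq_bigr => k _; apply: eq_bigr => j _.
  have -> : S j k = S^T k j by rewrite mxE.
  by rewrite Ssym; ring.
have ai0 : Im a * (\sum_j (u 0 j ^+ 2 + v 0 j ^+ 2)) = 0.
  have -> : Im a * (\sum_j (u 0 j ^+ 2 + v 0 j ^+ 2)) =
    \sum_j ((Im a * u 0 j + Re a * v 0 j) * u 0 j) - \sum_j ((Re a * u 0 j - Im a * v 0 j) * v 0 j).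
    by rewrite -sumrB mulr_sumr; apply: eq_bigr => j _; ring.
  under eq_bigr do rewrite -E2.
  under [X in _ - X]eq_bigr do rewrite -E1.
  by rewrite sw subrr.
have [j wj] : exists j, w 0 j != 0.
  apply/existsP; apply: contraR wn0 => /existsPn h.
  by apply/eqP/rowP => j; rewrite mxE; apply/eqP/negPn/h.
have uvj : (u 0 j != 0) || (v 0 j != 0).
  rewrite !mxE; move: wj; case: (w 0 j) => x y /=.
  by apply: contraR; rewrite negb_or !negbK => /andP[/eqP -> /eqP ->].
have spos : 0 < \sum_j (u 0 j ^+ 2 + v 0 j ^+ 2).
  rewrite (bigD1 j) //=; apply: ltr_pwDl; last first.
    by apply: sumr_ge0 => i _; rewrite addr_ge0 ?sqr_ge0.
  case/orP: uvj => h.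
    by apply: ltr_pwDl; rewrite ?sqr_ge0 // lt_def sqrf_eq0 h sqr_ge0.
  by apply: ltr_wpDl; rewrite ?sqr_ge0 // lt_def sqrf_eq0 h sqr_ge0.
have ia : Im a = 0.
  by move/eqP: ai0; rewrite mulf_eq0 (gt_eqF spos) orbF => /eqP.
exists (Re a); apply/eigenvalueP.
case/orP: uvj => h.
  exists u.
    by apply/rowP => k; rewrite !mxE E1 ia mul0r subr0 mxE.
  by apply: contraNneq h => ->; rewrite mxE.
exists v.
  by apply/rowP => k; rewrite !mxE E2 ia mul0r add0r mxE.
by apply: contraNneq h => ->; rewrite mxE.
Qed.
Local Close Scope complex_scope.
Definition ipm (R : realType) (m p : nat) (A B : 'M[R]_(m, p)) : R :=
  \sum_(k : 'I_m * 'I_p) A k.1 k.2 * B k.1 k.2.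

Lemma ipm_nested (R : realType) (m p : nat) (A B : 'M[R]_(m, p)) :
  ipm A B = \sum_i \sum_j A i j * B i j.
Proof. by rewrite /ipm pair_bigA. Qed.

Lemma frob_sq (R : realType) (m p : nat) (A : 'M[R]_(m, p)) : frob A ^+ 2 = ipm A A.
Proof.
rewrite /frob sqr_sqrtr; last by apply: sumr_ge0 => i _; apply: sumr_ge0 => j _; apply: sqr_ge0.
by rewrite ipm_nested; apply: eq_bigr => i _; apply: eq_bigr => j _; rewrite expr2.
Qed.

Lemma sqnorm_ipm (R : realType) (m : nat) (v : 'rV[R]_m) : sqnorm v = ipm v v.
Proof.
rewrite /sqnorm ipm_nested big_ord1; apply: eq_bigr => j _; by rewrite expr2.
Qed.

Lemma ipm_tr (R : realType) (m p : nat) (A B : 'M[R]_(m, p)) : ipm A B = \tr (A *m B^T).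
Proof.
rewrite ipm_nested /mxtrace; apply: eq_bigr => i _; rewrite mxE.
by apply: eq_bigr => j _; rewrite mxE.
Qed.

Lemma ipmC (R : realType) (m p : nat) (A B : 'M[R]_(m, p)) : ipm A B = ipm B A.
Proof. by apply: eq_bigr => k _; rewrite mulrC. Qed.

Lemma ipmDl (R : realType) (m p : nat) (A B C : 'M[R]_(m, p)) :
  ipm (A + B) C = ipm A C + ipm B C.
Proof. by rewrite /ipm -big_split; apply: eq_bigr => k _; rewrite mxE mulrDl. Qed.

Lemma ipmZl (R : realType) (m p : nat) (c : R) (A B : 'M[R]_(m, p)) :
  ipm (c *: A) B = c * ipm A B.
Proof. by rewrite /ipm mulr_sumr; apply: eq_bigr => k _; rewrite mxE mulrA. Qed.

Lemma ipmNl (R : realType) (m p : nat) (A B : 'M[R]_(m, p)) :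
  ipm (- A) B = - ipm A B.
Proof. by rewrite -scaleN1r ipmZl mulN1r. Qed.

Lemma ipmDr (R : realType) (m p : nat) (A B C : 'M[R]_(m, p)) :
  ipm C (A + B) = ipm C A + ipm C B.
Proof. by rewrite ipmC ipmDl ![ipm _ C]ipmC. Qed.

Lemma ipmZr (R : realType) (m p : nat) (c : R) (A B : 'M[R]_(m, p)) :
  ipm B (c *: A) = c * ipm B A.
Proof. by rewrite ipmC ipmZl ipmC. Qed.

Lemma ipm_ge0 (R : realType) (m p : nat) (A : 'M[R]_(m, p)) : 0 <= ipm A A.
Proof. by apply: sumr_ge0 => k _; rewrite -expr2 sqr_ge0. Qed.

Lemma ipm_eq0 (R : realType) (m p : nat) (A : 'M[R]_(m, p)) : ipm A A = 0 -> A = 0.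
Proof.
move=> h; apply/matrixP => i j; rewrite mxE.
have h0 : forall k : 'I_m * 'I_p, xpredT k -> 0 <= A k.1 k.2 * A k.1 k.2.
  by move=> k _; rewrite -expr2 sqr_ge0.
rewrite /ipm in h; have := @psumr_eq0P _ _ _ _ h0 h (i, j) isT.
by move=> /eqP; rewrite mulf_eq0 orbb => /eqP.
Qed.

Lemma ipm_quad3 (R : realType) (m p : nat) (a b c : 'M[R]_(m, p)) (t : R) :
  ipm (a + t *: b + t ^+ 2 *: c) (a + t *: b + t ^+ 2 *: c) =
  ipm a a + 2 * ipm a b * t + (ipm b b + 2 * ipm a c) * t ^+ 2
  + 2 * ipm b c * t ^+ 3 + ipm c c * t ^+ 4.
Proof.
rewrite !(ipmDl, ipmDr, ipmZl, ipmZr) (ipmC b a) (ipmC c a) (ipmC c b); ring.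
Qed.

Lemma ipm_quad2 (R : realType) (m p : nat) (a b : 'M[R]_(m, p)) (x y : R) :
  ipm (x *: a + y *: b) (x *: a + y *: b) =
  x ^+ 2 * ipm a a + 2 * x * y * ipm a b + y ^+ 2 * ipm b b.
Proof.
rewrite !(ipmDl, ipmDr, ipmZl, ipmZr) (ipmC b a); ring.
Qed.
Lemma Xt_P (R : realType) (n r : nat) (X : 'M[R]_(n, r)) (Xp : 'M[R]_(r, n)) :
  is_pinv X Xp -> X^T *m X *m Xp = X^T.
Proof.
case=> h1 _ h3 _.
by rewrite -mulmxA -{1}h3 -trmx_mul h1.
Qed.

Lemma Zp_split (R : realType) (n r : nat) (X Z : 'M[R]_(n, r)) (Xp : 'M[R]_(r, n)) :
  Zperp X Xp Z = Z - X *m (Xp *m Z).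
Proof. by rewrite /Zperp mulmxBl mul1mx mulmxA. Qed.

Lemma XtZp (R : realType) (n r : nat) (X Z : 'M[R]_(n, r)) (Xp : 'M[R]_(r, n)) :
  is_pinv X Xp -> X^T *m Zperp X Xp Z = 0.
Proof.
move=> hp; rewrite Zp_split mulmxBr !mulmxA (Xt_P hp) subrr //.
Qed.

Lemma ZtZp (R : realType) (n r : nat) (X Z : 'M[R]_(n, r)) (Xp : 'M[R]_(r, n)) :
  is_pinv X Xp -> Z^T *m Zperp X Xp Z = (Zperp X Xp Z)^T *m Zperp X Xp Z.
Proof.
move=> hp.
have -> : (Zperp X Xp Z)^T = Z^T - (Xp *m Z)^T *m X^T.
  by rewrite Zp_split linearB /= trmx_mul.
by rewrite mulmxBl -mulmxA XtZp // mulmx0 subr0.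
Qed.

Lemma eM_alg (R : realType) (n r : nat) (X Zp : 'M[R]_(n, r)) (G : 'M[R]_r) :
  (X *m X^T - (X *m G + Zp) *m (X *m G + Zp)^T) + Zp *m Zp^T =
  X *m (2^-1 *: X - 2^-1 *: (X *m G *m G^T) - Zp *m G^T)^T
  + (2^-1 *: X - 2^-1 *: (X *m G *m G^T) - Zp *m G^T) *m X^T.
Proof.
rewrite !linearD !linearN !linearZ /= !trmx_mul !trmxK.
rewrite ?(mulmxDl, mulmxDr, mulmxBl, mulmxBr, mulNmx, mulmxN) -?(scalemxAl, scalemxAr) ?mulmxA.
rewrite ?(mulmxDl, mulmxDr, mulmxBl, mulmxBr, mulNmx, mulmxN) ?mulmxA.
move: (X *m X^T) (X *m G *m G^T *m X^T) (X *m G *m Zp^T) (Zp *m G^T *m X^T) (Zp *m Zp^T)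
  => a b c d e.
by apply/matrixP => i j; rewrite !mxE; field.
Qed.

Lemma eM_decomp (R : realType) (n r : nat) (X Z : 'M[R]_(n, r)) (Xp : 'M[R]_(r, n)) :
  exists D0 : 'M[R]_(n, r),
  (X *m X^T - Z *m Z^T) + Zperp X Xp Z *m (Zperp X Xp Z)^T = X *m D0^T + D0 *m X^T.
Proof.
have hZ : Z = X *m (Xp *m Z) + Zperp X Xp Z by rewrite Zp_split addrC subrK.
eexists; rewrite [in X in _ - X]hZ; exact: eM_alg.
Qed.

Lemma ipm_eM (R : realType) (n r : nat) (X Z : 'M[R]_(n, r)) (Xp : 'M[R]_(r, n)) :
  is_pinv X Xp ->
  ipm (X *m X^T - Z *m Z^T) (Zperp X Xp Z *m (Zperp X Xp Z)^T) =
  - ipm (Zperp X Xp Z *m (Zperp X Xp Z)^T) (Zperp X Xp Z *m (Zperp X Xp Z)^T).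
Proof.
move=> hp.
have h1 := XtZp Z hp. have h3 := ZtZp Z hp.
move: (Zperp X Xp Z) h1 h3 => Zp h1 h3.
rewrite !ipm_tr !trmx_mul !trmxK.
rewrite mulmxBl linearB /= !mulmxA -(mulmxA X) h1 mulmx0 mul0mx linear0 sub0r.
rewrite -(mulmxA Z) h3 -!mulmxA mxtrace_mulC !mulmxA.
have h4 : Zp^T *m Z = Zp^T *m Zp by rewrite -[Zp^T *m Z]trmxK trmx_mul trmxK h3 trmx_mul trmxK.
congr (- _).
rewrite -!mulmxA mxtrace_mulC -mulmxA h4.
by rewrite !mulmxA.
Qed.

Lemma ipm_cv (R : realType) (n : nat) (u w : 'cV[R]_n) : ipm u w = (u^T *m w) 0 0.
Proof.
by rewrite ipm_nested mxE; apply: eq_bigr => i _; rewrite big_ord1 mxE.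
Qed.

Lemma ipm_rv (R : realType) (n : nat) (u w : 'rV[R]_n) : ipm u w = (u *m w^T) 0 0.
Proof.
rewrite ipm_nested big_ord1 mxE; apply: eq_bigr => i _; by rewrite mxE.
Qed.

Lemma rv_sq (R : realType) (n : nat) (v : 'rV[R]_n) : v *m v^T = (ipm v v)%:M.
Proof.
apply/matrixP => i j; rewrite (ord1 i) (ord1 j) ipm_rv.
by rewrite [in RHS]mxE eqxx mulr1n.
Qed.

Lemma ipm_outer (R : realType) (n : nat) (u w : 'cV[R]_n) :
  ipm (u *m w^T + w *m u^T) (u *m w^T + w *m u^T)
  = 2 * ipm u u * ipm w w + 2 * ipm u w ^+ 2.
Proof.
have E : forall (a b : 'cV[R]_n) i j, (a *m b^T) i j = a i 0 * b j 0.
  by move=> a b i j; rewrite mxE big_ord1 mxE.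
have C : forall (a b : 'cV[R]_n), ipm a b = \sum_i a i 0 * b i 0.
  by move=> a b; rewrite ipm_nested; apply: eq_bigr => i _; rewrite big_ord1.
rewrite ipm_nested !C expr2 -mulrA !big_distrlr /=.
have sw : \sum_i \sum_j u i 0 * u i 0 * (w j 0 * w j 0)
        = \sum_i \sum_j w i 0 * w i 0 * (u j 0 * u j 0).
  rewrite exchange_big; apply: eq_bigr => i _; apply: eq_bigr => j _ /=; ring.
rewrite (_ : forall x y : R, 2 * x + 2 * y = x + x + 2 * y); last by move=> x y; ring.
rewrite [X in _ = _ + X + _]sw.
rewrite mulr_sumr -!big_split /=.
apply: eq_bigr => i _; rewrite !mulr_sumr -!big_split /=.
apply: eq_bigr => j _; rewrite !mxE !big_ord1 !mxE; ring.
Qed.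

Lemma ipm_sumr (R : realType) (m p : nat) (I : finType) (a : 'M[R]_(m, p)) (F : I -> 'M[R]_(m, p)) :
  ipm a (\sum_k F k) = \sum_k ipm a (F k).
Proof.
apply: (big_morph _ (fun x y => ipmDr x y a)).
by rewrite /ipm big1 // => k _; rewrite mxE mulr0.
Qed.

Lemma rank_span (R : realType) (n r : nat) (X Z : 'M[R]_(n, r)) (F G : 'M[R]_(r, n)) :
  (\rank (X *m F + Z *m G)%R <= r + \rank Z)%N.
Proof.
apply: (leq_trans (mxrank_add _ _)); apply: leq_add.
  exact: leq_trans (mxrankM_maxl _ _) (rank_leq_col _).
exact: mxrankM_maxl.
Qed.

Lemma rank_eM (R : realType) (n r : nat) (X Z : 'M[R]_(n, r)) (Xp : 'M[R]_(r, n)) (x y : R) :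
  (\rank (x *: (X *m X^T - Z *m Z^T) + y *: (Zperp X Xp Z *m (Zperp X Xp Z)^T))%R
     <= r + \rank Z)%N.
Proof.
set Zp := Zperp X Xp Z.
have hZp : Zp = Z - X *m (Xp *m Z) by rewrite /Zp Zp_split.
have -> : (x *: (X *m X^T - Z *m Z^T) + y *: (Zp *m Zp^T))%R =
  (X *m (x *: X^T - y *: (Xp *m Z *m Zp^T)) + Z *m (y *: Zp^T - x *: Z^T))%R.
  rewrite {1}hZp mulmxBl !mulmxBr -!scalemxAr !mulmxA.
  move: (X *m X^T) (Z *m Z^T) (Z *m Zp^T) (X *m Xp *m Z *m Zp^T) => a b c d.
  by apply/matrixP => i j; rewrite !mxE; ring.
exact: rank_span.
Qed.

Lemma rank_L (R : realType) (n r : nat) (X Z : 'M[R]_(n, r)) (D : 'M[R]_(n, r)) (F1 G1 : 'M[R]_r) :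
  D = X *m F1 + Z *m G1 ->
  (\rank (X *m D^T + D *m X^T)%R <= r + \rank Z)%N.
Proof.
move=> hD.
have -> : (X *m D^T + D *m X^T)%R = (X *m (D^T + F1 *m X^T) + Z *m (G1 *m X^T))%R.
  by rewrite {2}hD mulmxDl mulmxDr !mulmxA addrA.
exact: rank_span.
Qed.
Lemma poly4_derive (R : realType) (f : R -> R) (k0 k1 k2 k3 k4 : R) :
  (forall t, f t = k0 + k1 * t + k2 * t ^+ 2 + k3 * t ^+ 3 + k4 * t ^+ 4) ->
  derive1 f 0 = k1 /\ derive1n 2 f 0 = 2 * k2.
Proof.
move=> hf.
set p : {poly R} := k0%:P + k1 *: 'X + k2 *: 'X^2 + k3 *: 'X^3 + k4 *: 'X^4.
have -> : f = horner p.
  by apply/funext => t; rewrite hf /p !hornerE.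
rewrite derive1nS derive1n1 -!derivE !horner_coef0.
split.
  by rewrite coef_deriv /p !coefE /=; ring.
by rewrite !coef_deriv /p !coefE /=; ring.
Qed.
Lemma expand_UUt (R : realType) (n r : nat) (X D Z : 'M[R]_(n, r)) (t : R) :
  (X + t *: D) *m (X + t *: D)^T - Z *m Z^T =
  (X *m X^T - Z *m Z^T) + t *: (X *m D^T + D *m X^T) + t ^+ 2 *: (D *m D^T).
Proof.
rewrite [(X + _)^T]linearD /= [(t *: D)^T]linearZ /= mulmxDl !mulmxDr -!scalemxAl -!scalemxAr scalerA -expr2.
move: (X *m X^T) (X *m D^T) (D *m X^T) (D *m D^T) (Z *m Z^T) => a b c d z.
by apply/matrixP => i j; rewrite !mxE; ring.
Qed.

Lemma fA_poly (R : realType) (n r m : nat) (A : {linear 'M[R]_n -> 'rV[R]_m})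
  (X Z D : 'M[R]_(n, r)) (t : R) :
  let a := A (X *m X^T - Z *m Z^T) in
  let b := A (X *m D^T + D *m X^T) in
  let c := A (D *m D^T) in
  fA A Z (X + t *: D) =
  ipm a a + 2 * ipm a b * t + (ipm b b + 2 * ipm a c) * t ^+ 2
  + 2 * ipm b c * t ^+ 3 + ipm c c * t ^+ 4.
Proof.
move=> a b c.
rewrite /fA expand_UUt.
have -> : A (X *m X^T - Z *m Z^T + t *: (X *m D^T + D *m X^T) + t ^+ 2 *: (D *m D^T))
  = a + t *: b + t ^+ 2 *: c by rewrite /a /b /c !linearD !linearZ.
by rewrite sqnorm_ipm ipm_quad3.
Qed.

Lemma first_order (R : realType) (n r m : nat) (A : {linear 'M[R]_n -> 'rV[R]_m})
  (X Z : 'M[R]_(n, r)) :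
  grad_zero (fA A Z) X -> forall D : 'M[R]_(n, r),
  ipm (A (X *m X^T - Z *m Z^T)) (A (X *m D^T + D *m X^T)) = 0.
Proof.
move=> hg D; have := hg D.
have [-> _] := poly4_derive (fA_poly A X Z D).
by move/eqP; rewrite mulf_eq0 pnatr_eq0 /= => /eqP.
Qed.

Lemma second_order (R : realType) (n r m : nat) (A : {linear 'M[R]_n -> 'rV[R]_m})
  (X Z : 'M[R]_(n, r)) :
  hess_psd (fA A Z) X -> forall D : 'M[R]_(n, r),
  0 <= ipm (A (X *m D^T + D *m X^T)) (A (X *m D^T + D *m X^T))
       + 2 * ipm (A (X *m X^T - Z *m Z^T)) (A (D *m D^T)).
Proof.
move=> hh D; have := hh D.
have [_ ->] := poly4_derive (fA_poly A X Z D).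
by rewrite pmulr_rge0.
Qed.

Lemma sum_col_outer (R : realType) (n r : nat) (Zp : 'M[R]_(n, r)) :
  \sum_k col k Zp *m (col k Zp)^T = Zp *m Zp^T.
Proof.
apply/matrixP => i j; rewrite summxE mxE; apply: eq_bigr => k _.
by rewrite mxE big_ord1 !mxE.
Qed.

Lemma sum_col_ipm (R : realType) (n r : nat) (Zp : 'M[R]_(n, r)) :
  \sum_k ipm (col k Zp) (col k Zp) = ipm Zp Zp.
Proof.
rewrite (ipm_nested Zp Zp) [RHS]exchange_big; apply: eq_bigr => k _.
by rewrite ipm_nested; apply: eq_bigr => i _; rewrite big_ord1 !mxE.
Qed.

Lemma second_bound (R : realType) (n r m : nat) (A : {linear 'M[R]_n -> 'rV[R]_m})
  (X Z : 'M[R]_(n, r)) (Xp : 'M[R]_(r, n)) (d nu lam : R) (v : 'rV[R]_r) :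
  is_pinv X Xp -> hess_psd (fA A Z) X -> 0 < nu ->
  (forall E : 'M[R]_n, (\rank E <= r + \rank Z)%N ->
      sqnorm (A E) / nu <= (1 + d) * frob E ^+ 2) ->
  v != 0 -> v *m (X^T *m X) = lam *: v ->
  - (nu * (1 + d) * lam * ipm (Zperp X Xp Z) (Zperp X Xp Z)) <=
  ipm (A (X *m X^T - Z *m Z^T)) (A (Zperp X Xp Z *m (Zperp X Xp Z)^T)).
Proof.
move=> hp hh nu0 rip vn0 hv.
have h1 := XtZp Z hp.
have hZp := Zp_split X Z Xp.
move: (Zperp X Xp Z) h1 hZp => Zp h1 hZp.
set ae := A (X *m X^T - Z *m Z^T).
set ac := X *m v^T.
have vv : 0 < ipm v v.
  by rewrite lt_def ipm_ge0 andbT; apply: contra vn0 => /eqP /ipm_eq0 ->.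
have acac : ipm ac ac = lam * ipm v v.
  rewrite ipm_cv /ac trmx_mul trmxK !mulmxA -(mulmxA v) hv -scalemxAl.
  by rewrite mxE -ipm_rv.
have key : forall k : 'I_r,
  0 <= nu * (1 + d) * (2 * (lam * ipm v v) * ipm (col k Zp) (col k Zp))
       + 2 * (ipm v v * ipm ae (A (col k Zp *m (col k Zp)^T))).
  move=> k.
  set b := col k Zp.
  have := second_order hh (b *m v).
  have hL : X *m (b *m v)^T + b *m v *m X^T = ac *m b^T + b *m ac^T.
    by rewrite /ac !trmx_mul !trmxK !mulmxA.
  have hDD : b *m v *m (b *m v)^T = ipm v v *: (b *m b^T).
    by rewrite trmx_mul !mulmxA -(mulmxA b) rv_sq mul_mx_scalar -scalemxAl.
  rewrite hL hDD linearZ /= ipmZr.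
  have acb : ipm ac b = 0.
    by rewrite ipm_cv /ac /b colE trmx_mul trmxK !mulmxA -(mulmxA v) h1 mulmx0 mul0mx mxE.
  have rk : (\rank (ac *m b^T + b *m ac^T)%R <= r + \rank Z)%N.
    rewrite -hL; apply: (@rank_L _ _ _ X Z _ (- (Xp *m Z *m (delta_mx k 0 *m v))) (delta_mx k 0 *m v)).
    rewrite /b colE hZp mulmxBl mulmxBl -!mulmxA mulmxN.
    by rewrite addrC.
  have := rip _ rk.
  rewrite frob_sq ipm_outer acb expr0n /= mulr0 addr0 acac sqnorm_ipm.
  rewrite ler_pdivrMr // => hr hs.
  have : ipm (A (ac *m b^T + b *m ac^T)) (A (ac *m b^T + b *m ac^T)) <=
         nu * (1 + d) * (2 * (lam * ipm v v) * ipm b b) by lra.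
  lra.
have := @sumr_ge0 _ _ (index_enum 'I_r) xpredT _ (fun k _ => key k).
rewrite big_split /=.
have E1 : \sum_(i < r) nu * (1 + d) * (2 * (lam * ipm v v) * ipm (col i Zp) (col i Zp))
  = nu * (1 + d) * (2 * (lam * ipm v v)) * ipm Zp Zp.
  rewrite -(sum_col_ipm Zp) (mulr_sumr _ _ _ (nu * (1 + d) * (2 * (lam * ipm v v)))); apply: eq_bigr => i _; ring.
have E2 : \sum_(i < r) 2 * (ipm v v * ipm ae (A (col i Zp *m (col i Zp)^T)))
  = 2 * ipm v v * ipm ae (A (Zp *m Zp^T)).
  by rewrite -(sum_col_outer Zp) linear_sum ipm_sumr (mulr_sumr _ _ _ (2 * ipm v v)); apply: eq_bigr => i _; ring.
rewrite E1 E2.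
move=> h.
have h2 : 0 <= 2 * ipm v v * (nu * (1 + d) * lam * ipm Zp Zp + ipm ae (A (Zp *m Zp^T))).
  by move: h; rewrite -!mulrA; lra.
have : 0 <= nu * (1 + d) * lam * ipm Zp Zp + ipm ae (A (Zp *m Zp^T)).
  by move: h2; rewrite pmulr_rge0 // mulr_gt0.
lra.
Qed.

Lemma eig_quad (R : realType) (n r : nat) (X : 'M[R]_(n, r)) (v : 'rV[R]_r) (a : R) :
  v *m (X^T *m X) = a *: v -> ipm (X *m v^T) (X *m v^T) = a * ipm v v.
Proof.
move=> hv.
rewrite ipm_cv trmx_mul trmxK !mulmxA -(mulmxA v) hv -scalemxAl.
by rewrite mxE -ipm_rv.
Qed.

Lemma ipm_gt0 (R : realType) (m p : nat) (A : 'M[R]_(m, p)) : A != 0 -> 0 < ipm A A.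
Proof. by move=> h; rewrite lt_def ipm_ge0 andbT; apply: contra h => /eqP /ipm_eq0 ->. Qed.

Lemma eig_nonneg (R : realType) (n r : nat) (X : 'M[R]_(n, r)) (a : R) :
  eigenvalue (X^T *m X) a -> 0 <= a.
Proof.
case/eigenvalueP => v hv vn0.
have h := eig_quad hv.
have vp := ipm_gt0 vn0.
have : 0 <= a * ipm v v by rewrite -h ipm_ge0.
by rewrite pmulr_lge0.
Qed.

Lemma eig_exists (R : realType) (n r : nat) (X : 'M[R]_(n, r)) :
  (0 < r)%N -> exists a, eigenvalue (X^T *m X) a.
Proof.
case: r X => [//|r] X _.
apply: sym_real_eig.
by rewrite trmx_mul trmxK.
Qed.

Lemma sigma_ge0 (R : realType) (n r : nat) (X : 'M[R]_(n, r)) :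
  (0 < r)%N -> 0 <= sigma_min_sq X.
Proof.
move=> r0; rewrite /sigma_min_sq; apply: lb_le_inf.
  by have [a ha] := eig_exists X r0; exists a.
by move=> a /= ha; apply: eig_nonneg ha.
Qed.

Lemma sigma_lb (R : realType) (n r : nat) (X : 'M[R]_(n, r)) (c : R) :
  (0 < r)%N -> (forall a, eigenvalue (X^T *m X) a -> c <= a) -> c <= sigma_min_sq X.
Proof.
move=> r0 h; rewrite /sigma_min_sq; apply: lb_le_inf.
  by have [a ha] := eig_exists X r0; exists a.
by move=> a /= ha; apply: h.
Qed.

Theorem theorem9 (R : realType) (n r : nat) (X Z : 'M[R]_(n, r))
  (Xp : 'M[R]_(r, n)) :
  is_pinv X Xp ->
  X *m X^T != Z *m Z^T ->
  ((delta_lb X Xp Z)%:E <= delta_XZ X Z)%E.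
Proof.
move=> hp hneq.
apply: le_ereal_inf_tmp => _ [d [m [A [hm [[/andP [d0 d1] [nu [nu0 rip]]] [hg hh]]]]] <-].
rewrite lee_fin.
have r0 : (0 < r)%N.
  case: r X Z Xp hp hneq {hg hh rip} => [|//] X Z Xp _.
  by rewrite !thinmx0 !mul0mx eqxx.
set e := X *m X^T - Z *m Z^T.
have en0 : e != 0 by rewrite subr_eq0.
set Zp := Zperp X Xp Z.
set M := Zp *m Zp^T.
set ae := A e. set am := A M.
have F1 : ipm ae ae + ipm ae am = 0.
  have [D0 hD0] := eM_decomp X Z Xp.
  by rewrite -ipmDr /ae /am -linearD /e /M /Zp hD0; apply: first_order.
have eM := ipm_eM Z hp. rewrite -/Zp -/M -/e in eM.
have rkE : forall x y : R, (\rank (x *: e + y *: M)%R <= r + \rank Z)%N.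
  by move=> x y; apply: rank_eM.
have epos : 0 < ipm e e by apply: ipm_gt0.
have [Zp0|Zpn0] := eqVneq Zp 0.
  exfalso.
  have am0 : am = 0 by rewrite /am /M Zp0 mul0mx linear0.
  have [h1 _] := rip _ (rkE 1 0).
  move: h1; rewrite scale1r scale0r addr0 frob_sq sqnorm_ipm -/ae.
  rewrite am0 in F1.
  have z : ipm ae (0 : 'rV[R]_m) = 0 by rewrite -(scale0r ae) ipmZr mul0r.
  move: F1; rewrite z addr0 => ->; rewrite mul0r.
  have : 0 < (1 - d) * ipm e e by rewrite mulr_gt0 // subr_gt0.
  lra.
have tMpos : 0 < ipm Zp Zp by apply: ipm_gt0.
have Mn0 : M != 0.
  apply: contra Zpn0 => /eqP M0.
  have : \tr M = 0 by rewrite M0 mxtrace0.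
  by rewrite /M -ipm_tr => /ipm_eq0 ->.
have mpos : 0 < ipm M M by apply: ipm_gt0.
set sig := sigma_min_sq X.
have sig0 : 0 <= sig := sigma_ge0 X r0.
have SB : - (nu * (1 + d) * sig * ipm Zp Zp) <= ipm ae am.
  have k0 : 0 < nu * (1 + d) * ipm Zp Zp by rewrite !mulr_gt0 // ?ltr_wpDr.
  have : - ipm ae am / (nu * (1 + d) * ipm Zp Zp) <= sig.
    apply: sigma_lb => // a ha.
    case/eigenvalueP: ha => v hv vn0.
    have := second_bound hp hh nu0 (fun E hE => proj2 (rip E hE)) vn0 hv.
    rewrite -/Zp -/e -/M -/ae -/am => h.
    rewrite ler_pdivrMr //.
    have -> : a * (nu * (1 + d) * ipm Zp Zp) = nu * (1 + d) * a * ipm Zp Zp by ring.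
    lra.
  rewrite ler_pdivrMr // => h.
  have -> : nu * (1 + d) * sig * ipm Zp Zp = sig * (nu * (1 + d) * ipm Zp Zp) by ring.
  lra.
set eps := frob e. set mu := frob M.
have eps2 : eps ^+ 2 = ipm e e by rewrite frob_sq.
have mu2 : mu ^+ 2 = ipm M M by rewrite frob_sq.
have eps0 : 0 < eps.
  rewrite lt_def sqrtr_ge0 andbT; apply/eqP => h.
  by move: eps2; rewrite h expr0n /= => /esym/eqP; rewrite (gt_eqF epos).
have mu0 : 0 < mu.
  rewrite lt_def sqrtr_ge0 andbT; apply/eqP => h.
  by move: mu2; rewrite h expr0n /= => /esym/eqP; rewrite (gt_eqF mpos).
have me : mu <= eps.
  have := ipm_ge0 (e + M).
  rewrite ipmDl (ipmDr e M e) (ipmDr e M M) (ipmC M e) eM -eps2 -mu2 => h.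
  have : mu ^+ 2 <= eps ^+ 2 by lra.
  by rewrite ler_pXn2r // ?nnegrE ltW.
have G := @bridge R eps mu (ipm ae ae / nu) (ipm ae am / nu) (ipm am am / nu)
  (sig * ipm Zp Zp) d eps0 mu0 me (mulr_ge0 sig0 (ltW tMpos)) d0 d1.
have nun : nu != 0 by rewrite gt_eqF.
have -> : delta_lb X Xp Z = gamma_fn (mu / eps) (sig * ipm Zp Zp / (eps * mu)).
  rewrite /delta_lb /alpha_of /beta_of -/Zp (negbTE Zpn0) -/M -/e -/eps -/mu -/sig.
  congr gamma_fn; rewrite -ipm_tr; field.
  by rewrite !gt_eqF.
apply: G.
- by rewrite -mulrDl F1 mul0r.
- rewrite -mulNr ler_pdivlMr // mulrC; lra.
- move=> x y.
  have [h1 h2] := rip _ (rkE x y).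
  have Eq1 : frob (x *: e + y *: M) ^+ 2 = x ^+ 2 * eps ^+ 2 - 2 * x * y * mu ^+ 2 + y ^+ 2 * mu ^+ 2.
    rewrite frob_sq ipm_quad2 eM eps2 mu2; ring.
  have Eq2 : sqnorm (A (x *: e + y *: M)) / nu =
     x ^+ 2 * (ipm ae ae / nu) + 2 * x * y * (ipm ae am / nu) + y ^+ 2 * (ipm am am / nu).
    by rewrite linearD !linearZ /= sqnorm_ipm ipm_quad2 -/ae -/am; field.
  by rewrite Eq1 Eq2 in h1 h2; split.
Qed.
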